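(* Let $n$, $k$ and $r$ be positive integers. Then $$V_k(n) \;=\; \sum_{i=0}^{r-1} Q_{rk}(n+ik) \;=\; Q_{rk}(n)+Q_{rk}(n+k)+\cdots+Q_{rk}(n+(r-1)k).$$
   Context: A partition of a positive integer $m$ is a non-increasing sequence of positive integers (its parts) summing to $m$. For positive integers $j,m$, $Q_j(m)$ denotes the total number of occurrences of the part $j$ among all partitions of $m$ (a partition in which $j$ appears $t$ times contributes $t$). $V_k(m)$ denotes the sum, over all partitions of $m$, of the number of distinct part sizes that occur $k$ or more times in that partition. *)

(* Defs.v *)
From mathcomp Require Import all_boot.
Set Implicit Arguments. Unset Strict Implicit. Unset Printing Implicit Defensive.

Definition is_partition (m : nat) (s : seq nat) : bool :=
  [&& sorted geq s, all (fun x => 0 < x) s & sumn s == m].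

Fixpoint seqs_len (b l : nat) : seq (seq nat) :=
  if l is l'.+1 then
    [seq x :: t | x <- iota 1 b, t <- seqs_len b l']
  else [:: [::]].

(* The list of all partitions of m (each exactly once): every partition of m
   has length <= m and parts in {1..m}, so it appears among the candidates. *)
Definition partitions (m : nat) : seq (seq nat) :=
  undup [seq s <- flatten [seq seqs_len m l | l <- iota 0 m.+1] | is_partition m s].

Definition Q (j m : nat) : nat := \sum_(s <- partitions m) count_mem j s.

Definition V (k m : nat) : nat :=
  \sum_(s <- partitions m) size [seq j <- undup s | k <= count_mem j s].

(* Main.v *)
Require Import Defs.
From mathcomp Require Import all_boot zify.
Set Implicit Arguments. Unset Strict Implicit.

Lemma sum_count (T : Type) (p : pred T) (l : seq T) :
  \sum_(x <- l) (p x : nat) = count p l.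
Proof. by elim: l => [|x l IH]; rewrite ?big_nil ?big_cons ?IH. Qed.

Lemma mem_seqs_len b l s :
  (s \in seqs_len b l) = (size s == l) && all (fun x => 0 < x <= b) s.
Proof.
elim: l s => [|l IH] [|x s] //=.
- by apply/negbTE/allpairsP; case=> [[y t]] /= [_ _].
- apply/allpairsP/idP.
  + case=> [[y t]] /= [Hy Ht [-> ->]].
    move: Ht; rewrite IH => /andP[/eqP-> ->]; move: Hy; rewrite mem_iota eqxx /=; lia.
  + move=> /andP[Hs /andP[Hx Ha]]; exists (x, s) => /=; split=> //.
    * by rewrite mem_iota; lia.
    * by rewrite IH -(eqSS (size s)) Hs Ha.
Qed.

Lemma mem_sumn x s : x \in s -> x <= sumn s.
Proof.
elim: s => //= y s IH; rewrite in_cons => /orP[/eqP->|/IH]; lia.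
Qed.

Lemma size_sumn s : all (fun x => 0 < x) s -> size s <= sumn s.
Proof. elim: s => //= y s IH /andP[Hy /IH]; lia. Qed.

Lemma count_sumn j s : count_mem j s * j <= sumn s.
Proof. elim: s => //= y s IH; case: eqP => [->|_]; lia. Qed.

Lemma mem_partitions m s : (s \in partitions m) = is_partition m s.
Proof.
rewrite /partitions mem_undup mem_filter andbC.
case Hs: (is_partition m s); last by rewrite andbF.
rewrite andbT.
move: Hs => /and3P[_ Hp /eqP Hm].
apply/flatten_mapP; exists (size s).
- by rewrite mem_iota /= add0n ltnS -Hm; apply: size_sumn.
- rewrite mem_seqs_len eqxx /=; apply/allP => x Hx.
  rewrite (allP Hp x Hx) /= -Hm; exact: mem_sumn.
Qed.

Lemma uniq_partitions m : uniq (partitions m).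
Proof. exact: undup_uniq. Qed.

Lemma geq_tr : transitive geq.
Proof. move=> a b c /= h1 h2; exact: leq_trans h2 h1. Qed.
Lemma geq_anti : antisymmetric geq.
Proof. move=> a b /andP[/= h1 h2]; apply/eqP; rewrite eqn_leq h1 h2 //. Qed.
Lemma geq_tot : total geq.
Proof. move=> a b /=; exact: leq_total. Qed.

Lemma perm_rem_iter (j t : nat) (x : seq nat) : t <= count_mem j x ->
  perm_eq x (nseq t j ++ iter t (rem j) x).
Proof.
elim: t x => [|t IH] x Hc; first exact: perm_refl.
rewrite iterSr.
have Hj : j \in x by rewrite -has_pred1 has_count; lia.
have Hp := perm_to_rem Hj.
have Hc' : t <= count_mem j (rem j x).
  by move: Hc; rewrite (permP Hp) /= eqxx; lia.
apply: (perm_trans Hp); rewrite /= perm_cons; exact: IH.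
Qed.

Lemma subseq_rem_iter (j t : nat) (x : seq nat) : subseq (iter t (rem j) x) x.
Proof.
elim: t => [|t IH] /=; first exact: subseq_refl.
exact: subseq_trans (rem_subseq _ _) IH.
Qed.

Lemma count_ge m j t : 0 < j ->
  count (fun s => t <= count_mem j s) (partitions m) =
  if t * j <= m then size (partitions (m - t * j)) else 0.
Proof.
move=> hj; case: leqP => Htj; last first.
  apply/eqP; rewrite eqn0Ngt -has_count; apply/hasPn => s.
  rewrite mem_partitions => /and3P[_ _ /eqP Hm].
  apply/negP => H1; have := count_sumn j s; rewrite Hm.
  have: t * j <= count_mem j s * j by rewrite leq_mul2r H1 orbT.
  lia.
pose g (s : seq nat) := sort geq (nseq t j ++ s).
rewrite -size_filter -(size_map g).
apply/esym/perm_size/uniq_perm.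
- rewrite map_inj_in_uniq ?uniq_partitions // => s1 s2.
  rewrite !mem_partitions => /and3P[S1 _ _] /and3P[S2 _ _] /(congr1 (fun x => (x : seq nat))).
  rewrite /g => /(perm_sortP geq_tot geq_tr geq_anti); rewrite perm_cat2l => Hp.
  exact: (@sorted_eq _ geq geq_tr geq_anti s1 s2 S1 S2 Hp).
- by rewrite filter_uniq ?uniq_partitions.
move=> x; rewrite mem_filter mem_partitions; apply/idP/idP.
- case/mapP => s; rewrite mem_partitions => /and3P[S1 P1 /eqP M1] ->.
  have Hps : perm_eq (g s) (nseq t j ++ s) by rewrite /g perm_sort perm_refl.
  rewrite /is_partition {1}/g sort_sorted; last exact: geq_tot.
  rewrite (permP Hps) count_cat count_nseq /= eqxx mul1n leq_addr /=.
  rewrite (perm_all _ Hps) all_cat P1 andbT.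
  rewrite (perm_sumn Hps) sumn_cat sumn_nseq M1.
  apply/andP; split.
    by apply/allP => y /nseqP [-> _].
  apply/eqP; lia.
- case/andP => Hc /and3P[Sx Px /eqP Mx].
  have Hp := perm_rem_iter Hc.
  have Hsub := subseq_rem_iter j t x.
  apply/mapP; exists (iter t (rem j) x).
    rewrite mem_partitions /is_partition (subseq_sorted geq_tr Hsub Sx).
    rewrite /=; apply/andP; split.
      by apply/allP => y Hy; apply: (allP Px); exact: (mem_subseq Hsub)...
    move: (perm_sumn Hp); rewrite sumn_cat sumn_nseq Mx => ->; by rewrite mulnC addKn.
  apply: (@sorted_eq _ geq geq_tr geq_anti) => //.
    by rewrite /g sort_sorted //; exact: geq_tot.
  by rewrite perm_sym /g perm_sort perm_sym.
Qed.

Lemma sum_min c B : \sum_(1 <= t < B.+1) (t <= c : nat) = minn c B.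
Proof.
elim: B => [|B IH]; first by rewrite big_geq // minn0.
rewrite big_nat_recr //= IH; case: (leqP B.+1 c) => H /=; lia.
Qed.

Lemma Q_sum j m B : 0 < j -> m <= B ->
  Q j m = \sum_(1 <= t < B.+1) count (fun s => t <= count_mem j s) (partitions m).
Proof.
move=> hj hB.
under eq_bigr do rewrite -sum_count.
rewrite exchange_big /Q; apply: eq_big_seq => s.
rewrite mem_partitions => /and3P[_ _ /eqP Hm].
rewrite sum_min; apply/esym/minn_idPl.
have := count_sumn j s; rewrite Hm.
have : count_mem j s <= count_mem j s * j by rewrite leq_pmulr.
lia.
Qed.

Lemma V_sum k m B : 0 < k -> m <= B ->
  V k m = \sum_(1 <= j < B.+1) count (fun s => k <= count_mem j s) (partitions m).
Proof.
move=> hk hB.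
under eq_bigr do rewrite -sum_count.
rewrite exchange_big /V; apply: eq_big_seq => s.
rewrite mem_partitions => /and3P[_ Ps /eqP Hm].
rewrite sum_count -size_filter; apply: perm_size; apply: uniq_perm.
- by rewrite filter_uniq ?undup_uniq.
- by rewrite filter_uniq ?iota_uniq.
move=> j; rewrite !mem_filter mem_undup mem_iota.
case Hc: (k <= count_mem j s) => //=.
have Hj : j \in s by rewrite -has_pred1 has_count; exact: leq_trans hk Hc.
rewrite Hj; have := mem_sumn Hj; have := allP Ps j Hj; rewrite Hm /=; lia.
Qed.

Lemma reindex (G : nat -> nat) r T :
  \sum_(1 <= t < T.+1) \sum_(0 <= i < r) G (t * r - i) =
  \sum_(1 <= j < (r * T).+1) G j.
Proof.
elim: T => [|T IH]; first by rewrite muln0 !big_geq.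
rewrite [RHS](@big_cat_nat _ _ _ (r * T).+1) //=; last first.
  by rewrite ltnS leq_mul2l leqnSn orbT.
rewrite big_nat_recr //= IH.
congr (_ + _).
rewrite -{1}(add0n (r * T).+1) big_addn.
have -> : (r * T.+1).+1 - (r * T).+1 = r by rewrite subSS mulnS addnK.
rewrite [RHS]big_nat_rev; apply: eq_big_nat => i Hi.
congr G; rewrite mulSn mulnC; lia.
Qed.

Unset Implicit Arguments.
Theorem theorem2 (n k r : nat) (hn : 0 < n) (hk : 0 < k) (hr : 0 < r) :
  V k n = \sum_(0 <= i < r) Q (r * k) (n + i * k).
Proof.
pose T := n + r * k.
pose F d := if d <= n then size (partitions (n - d)) else 0.
have HT : n <= r * T by rewrite /T; nia.
transitivity (\sum_(1 <= t < T.+1) \sum_(0 <= i < r) F ((t * r - i) * k)).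
  rewrite (reindex (fun x => F (x * k))) (V_sum (B := r * T)) //.
  apply: eq_big_nat => j /andP[Hj _].
  by rewrite count_ge // mulnC.
rewrite exchange_big /=; apply: eq_big_nat => i /andP[_ Hi].
rewrite (Q_sum (B := T)); last by rewrite /T; nia.
  2: by rewrite muln_gt0 hr hk.
apply: eq_big_nat => t /andP[Ht _].
rewrite count_ge; last by rewrite muln_gt0 hr hk.
rewrite /F mulnBl mulnA.
have : i * k <= t * r * k by rewrite leq_mul2r; apply/orP; right; nia.
move: (t * r * k) (i * k) => a b Hab.
have -> : (a - b <= n) = (a <= n + b) by lia.
case: ifP => // _; congr (size (partitions _)); lia.
Qed.
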